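(* If a normal mode transformation exists, then $\bm{\Omega}$ is positive definite.
   Context: Fix an integer $N\ge 1$, real numbers $v$ with $|v|<1$, $L>0$, $L_{\star}\ge 0$, an integer $M\ge 1$ and real coefficients $c_{1}=1,c_{2},\dots,c_{M}$. Let $F(k)=\sum_{i=1}^{M}(-1)^{i-1}c_{i}L_{\star}^{2i-2}k^{2i-1}$ and $k_{n}=n\pi/L$, and assume $F(k_{n})^{2}\neq v^{2}k_{n}^{2}$ for $n=1,\dots,N$. Put $u_{n}=\sqrt{|F(k_{n})^{2}-v^{2}k_{n}^{2}|}/k_{n}>0$, and $\varepsilon_{n}=1$ if $F(k_{n})^{2}-v^{2}k_{n}^{2}>0$, $\varepsilon_{n}=0$ otherwise. Define $N\times N$ matrices $\bm\sigma,\bm\rho,\bm\xi$ by $\sigma_{nn}=0$, $\sigma_{nm}=\dfrac{2iv\sqrt{nm}\,[1-(-1)^{n+m}]}{\pi\sqrt{u_{n}u_{m}}\,(m^{2}-n^{2})}$ for $n\neq m$, $\bm\rho=\mathrm{diag}(n u_{n}\varepsilon_{n})$, $\bm\xi=\mathrm{diag}(-n u_{n}(1-\varepsilon_{n}))$. With $\mathbf{I}$ the $N\times N$ identity, define the $2N\times 2N$ matrices $\bm{\Sigma}=\begin{pmatrix}\mathbf{I}&\mathbf{0}\\ \mathbf{0}&-\mathbf{I}\end{pmatrix}$, $\bm{\Gamma}=\begin{pmatrix}\mathbf{0}&\mathbf{I}\\ \mathbf{I}&\mathbf{0}\end{pmatrix}$, $\mathbf{R}=\bm{\Sigma}-\begin{pmatrix}\bm\sigma&\bm\sigma\\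 \bm\sigma&\bm\sigma\end{pmatrix}$, $\bm{\Omega}=\begin{pmatrix}\bm\rho&\bm\xi\\ \bm\xi&\bm\rho\end{pmatrix}$. Standing assumption: $\mathbf{R}$ is invertible. Let $\mathbf{D}=\mathbf{R}^{-1}\bm{\Omega}$. Here ${}^{*}$ denotes entrywise complex conjugation and ${}^{\mathrm{H}}$ the conjugate transpose. A normal mode transformation is a $2N\times2N$ matrix $\mathbf{T}$ such that (i) $\mathbf{T}^{\mathrm{H}}\mathbf{R}\mathbf{T}=\bm{\Sigma}$; (ii) $\mathbf{T}=\bm{\Gamma}\mathbf{T}^{*}\bm{\Gamma}$; (iii) $\mathbf{T}^{-1}\mathbf{D}\mathbf{T}=\mathrm{diag}(\mu_{1},\dots,\mu_{N},-\mu_{1},\dots,-\mu_{N})$ for some real numbers $\mu_{n}>0$, where $\mathbf{T}^{-1}=\bm{\Sigma}\mathbf{T}^{\mathrm{H}}\mathbf{R}$. *)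

(* Defs.v *)
From HB Require Import structures.
From mathcomp Require Import all_boot all_order all_algebra.
From mathcomp Require Import complex.
From mathcomp Require Import reals trigo.
Set Implicit Arguments. Unset Strict Implicit. Unset Printing Implicit Defensive.
Import Order.TTheory GRing.Theory Num.Theory.
Local Open Scope ring_scope.
Local Open Scope complex_scope.

Section Model.
Variable R : realType.
Local Notation C := R[i].

Variables (v L Lstar : R) (M : nat) (c : nat -> R) (N : nat).

Definition kn (n : nat) : R := n%:R * pi / L.

Definition Fk (k : R) : R :=
  \sum_(1 <= i < M.+1) (-1) ^+ (i.-1) * c i * Lstar ^+ (2 * i - 2) * k ^+ (2 * i - 1).

Definition disc (n : nat) : R := Fk (kn n) ^+ 2 - v ^+ 2 * kn n ^+ 2.

Definition un (n : nat) : R := Num.sqrt `|disc n| / kn n.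

Definition epsn (n : nat) : R := if 0 < disc n then 1 else 0.

(* Indices n = 1..N are represented by i : 'I_N with n = i.+1. *)
Definition sigma_mx : 'M[C]_N :=
  \matrix_(i < N, j < N)
    if i == j then 0 else
    let n := i.+1 in let m := j.+1 in
    ((2 * v * Num.sqrt (n%:R * m%:R) * (1 - (-1) ^+ (n + m))
       / (pi * Num.sqrt (un n * un m) * (m%:R ^+ 2 - n%:R ^+ 2)))%:C) * 'i.

Definition rho_mx : 'M[C]_N :=
  \matrix_(i < N, j < N) if i == j then ((i.+1)%:R * un i.+1 * epsn i.+1)%:C else 0.

Definition xi_mx : 'M[C]_N :=
  \matrix_(i < N, j < N)
    if i == j then (- ((i.+1)%:R * un i.+1 * (1 - epsn i.+1)))%:C else 0.

Definition Sigma_mx : 'M[C]_(N + N) := block_mx 1%:M 0 0 (- 1%:M).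
Definition Gamma_mx : 'M[C]_(N + N) := block_mx 0 1%:M 1%:M 0.
Definition R_mx : 'M[C]_(N + N) :=
  Sigma_mx - block_mx sigma_mx sigma_mx sigma_mx sigma_mx.
Definition Omega_mx : 'M[C]_(N + N) := block_mx rho_mx xi_mx xi_mx rho_mx.
Definition D_mx : 'M[C]_(N + N) := invmx R_mx *m Omega_mx.

End Model.

Definition conjmx (C : numClosedFieldType) (m n : nat) (A : 'M[C]_(m, n)) : 'M[C]_(m, n) :=
  map_mx Num.conj A.
Definition adjmx (C : numClosedFieldType) (m n : nat) (A : 'M[C]_(m, n)) : 'M[C]_(n, m) :=
  (conjmx A)^T.

Definition posdef (C : numClosedFieldType) (n : nat) (A : 'M[C]_n) : Prop :=
  forall x : 'cV[C]_n, x != 0 -> 0 < (adjmx x *m A *m x) 0 0.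

Definition diag_pm (R : realType) (N : nat) (mu : 'I_N -> R) : 'M[R[i]]_(N + N) :=
  block_mx (diag_mx (\row_j (mu j)%:C)) 0 0 (diag_mx (\row_j (- mu j)%:C)).

Definition is_NMT (R : realType) (v L Lstar : R) (M : nat) (c : nat -> R) (N : nat)
    (T : 'M[R[i]]_(N + N)) : Prop :=
  let Rm := R_mx v L Lstar M c N in
  [/\ adjmx T *m Rm *m T = Sigma_mx R N,
      T = Gamma_mx R N *m conjmx T *m Gamma_mx R N &
      exists mu : 'I_N -> R, (forall j, 0 < mu j) /\
        (Sigma_mx R N *m adjmx T *m Rm) *m D_mx v L Lstar M c N *m T = diag_pm mu].

(* Main.v *)
Require Import Defs.
From HB Require Import structures.
From mathcomp Require Import all_boot all_order all_algebra.
From mathcomp Require Import complex.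
From mathcomp Require Import reals trigo.
From mathcomp Require Import ring.
Import Order.TTheory GRing.Theory Num.Theory.
Local Open Scope ring_scope.
Local Open Scope complex_scope.

Lemma adjmxM (C : numClosedFieldType) m n p (A : 'M[C]_(m, n)) (B : 'M[C]_(n, p)) :
  adjmx (A *m B) = adjmx B *m adjmx A.
Proof. by rewrite /adjmx /conjmx -trmx_mul; congr trmx; apply: map_mxM. Qed.

Lemma diag_quad_pos (R : realType) n (d : 'I_n -> R) (y : 'cV[R[i]]_n) :
  (forall k, 0 < d k) -> y != 0 ->
  0 < (adjmx y *m diag_mx (\row_k (d k)%:C) *m y) 0 0.
Proof.
move=> dpos ynz.
have [k0 yk0] : exists k, y k 0 != 0.
  apply/existsP; apply: contraR ynz; rewrite negb_exists => /forallP H.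
  by apply/eqP/matrixP => i j; rewrite (ord1 j) mxE; apply/eqP; move: (H i); rewrite negbK.
rewrite mul_mx_diag !mxE.
have E : forall k, (\matrix_(i, j) (adjmx y i j * (\row_k (d k)%:C) 0 j)) 0 k * y k 0
   = (d k)%:C * `|y k 0| ^+ 2.
  move=> k; rewrite !mxE normCK /adjmx /conjmx. ring.

rewrite (eq_bigr _ (fun k _ => E k)) (bigD1 k0) //=.
apply: ltr_pwDl.
  by apply: mulr_gt0; [rewrite ltcR; apply: dpos | rewrite exprn_gt0 // normr_gt0].
apply: sumr_ge0 => k _; apply: mulr_ge0; last by rewrite exprn_ge0.
by rewrite lecR ltW.
Qed.

Lemma massoc (K : pzRingType) p q r s t (a : 'M[K]_(p,q)) (b : 'M[K]_(q,r))
  (c : 'M[K]_(r,r)) (dd : 'M[K]_(r,s)) (e : 'M[K]_(s,t)) :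
  a *m b *m c *m (dd *m e) = a *m (b *m c *m dd) *m e.
Proof. by rewrite !mulmxA. Qed.

Theorem lemma5 (R : realType) (N : nat) (v L Lstar : R) (M : nat) (c : nat -> R) :
  (1 <= N)%N -> `|v| < 1 -> 0 < L -> 0 <= Lstar -> (1 <= M)%N -> c 1%N = 1 ->
  (forall n : nat, (1 <= n <= N)%N ->
     Fk Lstar M c (kn L n) ^+ 2 != v ^+ 2 * kn L n ^+ 2) ->
  R_mx v L Lstar M c N \in unitmx ->
  (exists T : 'M[R[i]]_(N + N), is_NMT v L Lstar M c T) ->
  posdef (Omega_mx v L Lstar M c N).
Proof.
move=> _ _ _ _ _ _ _ Ru [T [H1 _ [mu [mupos H3]]]].
set Rm := R_mx v L Lstar M c N in Ru H1 H3.
set Om := Omega_mx v L Lstar M c N.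
set S := Sigma_mx R N in H1 H3.
have SS : S *m S = 1%:M.
  rewrite /S /Sigma_mx mulmx_block !mulmx0 !mul0mx !mul1mx !addr0 !add0r.
  by rewrite mulmxN mulNmx opprK mul1mx -scalar_mx_block.
have Su : S \in unitmx by case: (mulmx1_unit SS).
have Tu : T \in unitmx.
  by move: Su; rewrite -H1 !unitmx_mul => /andP[/andP[_ _] ->].
have H4 : adjmx T *m Om *m T = S *m diag_pm mu.
  rewrite -H3 /D_mx -!mulmxA (mulmxA Rm) mulmxV // mul1mx.
  by rewrite !mulmxA SS mul1mx.
pose d : 'I_(N + N) -> R := fun k => match split k with inl j => mu j | inr j => mu j end.
have H5 : S *m diag_pm mu = diag_mx (\row_k (d k)%:C).
  rewrite /S /Sigma_mx /diag_pm mulmx_block !mulmx0 !mul0mx !mul1mx !addr0 !add0r.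
  rewrite mulNmx mul1mx.
  have -> : \row_k (d k)%:C = row_mx (\row_j (mu j)%:C) (\row_j (mu j)%:C).
    apply/matrixP => i j; rewrite !mxE /d.
    by case: (split j) => a; rewrite mxE.
  rewrite diag_mx_row; congr block_mx.
  apply/matrixP => i j; rewrite !mxE; case: (i == j) => /=; rewrite ?mulr1n ?mulr0n ?oppr0 //.
  by apply/eqP; rewrite eq_complex /= opprK oppr0 !eqxx.
move=> x xnz.
pose y := invmx T *m x.
have xE : x = T *m y by rewrite /y mulmxA mulmxV // mul1mx.
have ynz : y != 0.
  by apply: contraNneq xnz => y0; rewrite xE y0 mulmx0.
rewrite xE adjmxM.
rewrite massoc.
rewrite H4 H5.
have dp : forall k, 0 < d k by move=> k; rewrite /d; case: (split k).
exact: (@diag_quad_pos _ _ _ _ dp ynz).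
Qed.
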